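(* For every $\beta\in[0,\infty)$, $N\in\mathbb N$, $(x,y)\in\widehat\Lambda_N\times\widehat\Lambda_N$, $t\ge0$ and every symmetric function $f:\widehat\Lambda_N\times\widehat\Lambda_N\to\mathbb R$ (i.e. $f(a,b)=f(b,a)$), $$\mathsf E^N\big[f(X^{N,x}_t,Y^{N,y}_t)\big]=\widetilde{\mathsf E}^N\big[f(\widetilde X^{N,U}_t,\widetilde Y^{N,V}_t)\big],$$ where $(U,V)$ is independent of the dynamics and equals $(x,y)$ or $(y,x)$ with probability $1/2$ each.
   Context: Fix $\alpha,\alpha_L,\alpha_R>0$, $\beta\ge0$, $\Lambda_N=\{1,\dots,N-1\}$, $\widehat\Lambda_N=\{0,\dots,N\}$. $A^N$ acts on $f:\widehat\Lambda_N\to\mathbb R$ by $A^Nf(x)=\mathbf 1_{\{x\in\Lambda_N\}}N^2\sum_{z\in\Lambda_N,|z-x|=1}\alpha(f(z)-f(x))+\mathbf 1_{\{x=1\}}N^{2-\beta}\alpha_L(f(0)-f(1))+\mathbf 1_{\{x=N-1\}}N^{2-\beta}\alpha_R(f(N)-f(N-1))$. $(X^{N,x}_t,Y^{N,y}_t)_{t\ge0}$, with law/expectation $\mathsf P^N,\mathsf E^N$, is the Markov process on $\widehat\Lambda_N^2$ started at $(x,y)$ with generator $B^Nf(x,y)=A^Nf(\cdot,y)(x)+A^Nf(x,\cdot)(y)+N^2\mathbf 1_{\{x,y\notin\{0,N\}\}}\mathbf 1_{\{|x-y|=1\}}\big((f(x,x)-f(x,y))+(f(y,y)-f(x,y))\big)$.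 $(\widetilde X^{N,x}_t,\widetilde Y^{N,y}_t)_{t\ge0}$, with law/expectation $\widetilde{\mathsf P}^N,\widetilde{\mathsf E}^N$, is the (hierarchical ''first/second class'') Markov process on $\widehat\Lambda_N^2$ started at $(x,y)$ with generator $C^Nf(x,y)=A^Nf(\cdot,y)(x)+A^Nf(x,\cdot)(y)+N^2\mathbf 1_{\{x,y\in\Lambda_N\}}\mathbf 1_{\{|x-y|=1\}}\,2\,(f(x,x)-f(x,y))$. *)

(* Defs.v *)
From HB Require Import structures.
From mathcomp Require Import all_boot all_order all_algebra.
From mathcomp Require Import all_classical all_reals all_analysis.
Set Implicit Arguments. Unset Strict Implicit. Unset Printing Implicit Defensive.
Import Order.TTheory GRing.Theory Num.Theory.
Import numFieldNormedType.Exports.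
Local Open Scope ring_scope.

(* Sites \hat\Lambda_N = {0,...,N} are 'I_N.+1 ; pairs of sites form the
   finite state space of the two-particle processes. *)
Definition site (N : nat) := 'I_N.+1.
Definition pstate (N : nat) := (site N * site N)%type.

Section Gen.
Variable R : realType.
Variables (alpha alphaL alphaR beta : R).

Definition genA (N : nat) (f : site N -> R) (x : site N) : R :=
  (if (0 < x < N)%N then
     (N%:R) ^+ 2 * \sum_(z : site N | (0 < z < N)%N && ((z == x.+1 :> nat) || (x == z.+1 :> nat)))
        alpha * (f z - f x)
   else 0)
  + (if (x == 1%N :> nat) then powR (N%:R) (2 - beta) * alphaL * (f ord0 - f x) else 0)
  + (if (x == N.-1 :> nat) then powR (N%:R) (2 - beta) * alphaR * (f ord_max - f x) else 0).

Definition genB (N : nat) (f : pstate N -> R) (p : pstate N) : R :=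
  let x := p.1 in let y := p.2 in
  genA (fun a => f (a, y)) x + genA (fun b => f (x, b)) y
  + (N%:R) ^+ 2 *
    (if [&& (x != 0%N :> nat), (x != N :> nat), (y != 0%N :> nat), (y != N :> nat)
           & (x == y.+1 :> nat) || (y == x.+1 :> nat)]
     then (f (x, x) - f (x, y)) + (f (y, y) - f (x, y)) else 0).

(* generator C^N (hierarchical first/second class dynamics) *)
Definition genC (N : nat) (f : pstate N -> R) (p : pstate N) : R :=
  let x := p.1 in let y := p.2 in
  genA (fun a => f (a, y)) x + genA (fun b => f (x, b)) y
  + (N%:R) ^+ 2 *
    (if [&& (0 < x < N)%N, (0 < y < N)%N
           & (x == y.+1 :> nat) || (y == x.+1 :> nat)]
     then 2 * (f (x, x) - f (x, y)) else 0).

(* Transition semigroup of the finite-state continuous-time Markov chain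
   with generator G:  E_s[f(Z_t)] = (e^{tG} f)(s) = sum_k t^k/k! (G^k f)(s). *)
Definition semigroup (S : finType) (G : (S -> R) -> (S -> R)) (t : R)
    (f : S -> R) (s : S) : R :=
  limn (fun n : nat => \sum_(k < n) t ^+ k / (k`!)%:R * iter k G f s).
End Gen.

(* Main.v *)
Require Import Defs.
From HB Require Import structures.
From mathcomp Require Import all_boot all_order all_algebra.
From mathcomp Require Import all_classical all_reals all_analysis.
From mathcomp Require Import ring lra zify.
Import Order.TTheory GRing.Theory Num.Theory.
Import numFieldNormedType.Exports.
Local Open Scope ring_scope.

Section Aux.
Variable R : realType.
Variables (alpha alphaL alphaR beta : R) (N : nat).

Lemma genA_avg (h1 h2 : site N -> R) (x : site N) :
  genA alpha alphaL alphaR beta (fun a => (h1 a + h2 a) / 2) x =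
  (genA alpha alphaL alphaR beta h1 x + genA alpha alphaL alphaR beta h2 x) / 2.
Proof.
rewrite /genA.
have -> : \sum_(z : site N | (0 < z < N)%N && ((z == x.+1 :> nat) || (x == z.+1 :> nat)))
        alpha * ((h1 z + h2 z) / 2 - (h1 x + h2 x) / 2) =
   (\sum_(z : site N | (0 < z < N)%N && ((z == x.+1 :> nat) || (x == z.+1 :> nat)))
        alpha * (h1 z - h1 x) + \sum_(z : site N | (0 < z < N)%N && ((z == x.+1 :> nat) || (x == z.+1 :> nat)))
        alpha * (h2 z - h2 x)) / 2.
  rewrite -big_split /= mulr_suml; apply: eq_bigr => z _; ring.
case: ifP => _; case: ifP => _; case: ifP => _; ring.
Qed.

Definition symz (g : pstate N -> R) : pstate N -> R :=
  fun p => (g p + g (p.2, p.1)) / 2.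

Lemma cond_eq (x y : site N) :
  [&& (x != 0%N :> nat), (x != N :> nat), (y != 0%N :> nat), (y != N :> nat)
           & (x == y.+1 :> nat) || (y == x.+1 :> nat)] =
  [&& (0 < x < N)%N, (0 < y < N)%N & (x == y.+1 :> nat) || (y == x.+1 :> nat)].
Proof.
have hx := ltn_ord x; have hy := ltn_ord y.
apply/idP/idP.
  case/and5P=> a b c d e; rewrite e andbT; apply/andP; split; apply/andP; split; lia.
case/and3P=> /andP[a b] /andP[c d] e; rewrite e andbT; apply/and4P; split; lia.
Qed.

Lemma key (g : pstate N -> R) (p : pstate N) :
  genB alpha alphaL alphaR beta (symz g) p = symz (genC alpha alphaL alphaR beta g) p.
Proof.
case: p => x y; rewrite /genB /genC /symz /=.
rewrite (genA_avg (fun a => g (a, y)) (fun a => g (y, a))).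
rewrite (genA_avg (fun a => g (x, a)) (fun a => g (a, x))).
rewrite cond_eq.
have -> : [&& (0 < y < N)%N, (0 < x < N)%N & (y == x.+1 :> nat) || (x == y.+1 :> nat)]
  = [&& (0 < x < N)%N, (0 < y < N)%N & (x == y.+1 :> nat) || (y == x.+1 :> nat)].
  by rewrite andbCA orbC.
case: ifP => _; ring.
Qed.

Lemma iter_key (g : pstate N -> R) k :
  iter k (genB alpha alphaL alphaR beta (N:=N)) (symz g) =
  symz (iter k (genC alpha alphaL alphaR beta (N:=N)) g).
Proof.
elim: k => [//|k IH]; rewrite !iterS IH; apply: funext => p; exact: key.
Qed.

Hypotheses (ha : 0 <= alpha) (haL : 0 <= alphaL) (haR : 0 <= alphaR).

Definition KA : R := N%:R ^+ 2 * (\sum_(z : site N) alpha * 2)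
  + powR N%:R (2 - beta) * alphaL * 2 + powR N%:R (2 - beta) * alphaR * 2.

Lemma norm_if (b : bool) (X : R) : `|(if b then X else 0)| <= `|X|.
Proof. by case: b; rewrite ?normr0 ?normr_ge0. Qed.

Lemma diff_bound (T : Type) (h : T -> R) (c : R) (a : R) u v : 0 <= a ->
  (forall z, `|h z| <= c) -> `|a * (h u - h v)| <= a * 2 * c.
Proof.
move=> a0 hc; rewrite normrM ger0_norm // -mulrA ler_wpM2l //.
apply: le_trans (ler_normB _ _) _; have := hc u; have := hc v; lra.
Qed.

Lemma genA_bound (h : site N -> R) (c : R) : 0 <= c -> (forall z, `|h z| <= c) ->
  forall x, `|genA alpha alphaL alphaR beta h x| <= KA * c.
Proof.
move=> c0 hc x; rewrite /genA /KA !mulrDl.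
apply: le_trans (ler_normD _ _) _; apply: lerD; last first.
  apply: le_trans (norm_if _ _) _; exact: diff_bound (mulr_ge0 (powR_ge0 _ _) _) hc.
apply: le_trans (ler_normD _ _) _; apply: lerD; last first.
  apply: le_trans (norm_if _ _) _; exact: diff_bound (mulr_ge0 (powR_ge0 _ _) _) hc.
apply: le_trans (norm_if _ _) _.
rewrite normrM ger0_norm ?exprn_ge0 // -mulrA ler_wpM2l ?exprn_ge0 //.
apply: le_trans (ler_norm_sum _ _ _) _.
rewrite mulr_suml.
apply: le_trans (_ : \sum_(z : site N) `|alpha * (h z - h x)| <= _).
  rewrite [X in _ <= X](bigID (fun z : site N => (0 < z < N)%N && ((z == x.+1 :> nat) || (x == z.+1 :> nat)))) /=.
  by rewrite lerDl sumr_ge0.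
by apply: ler_sum => z _; exact: diff_bound.
Qed.

Definition KC : R := KA + KA + N%:R ^+ 2 * 4.

Lemma KA_ge0 : 0 <= KA.
Proof.
rewrite /KA; apply: addr_ge0; [apply: addr_ge0|].
- apply: mulr_ge0; first exact: exprn_ge0.
  by apply: sumr_ge0 => z _; apply: mulr_ge0.
- by apply: mulr_ge0 => //; apply: mulr_ge0 => //; exact: powR_ge0.
- by apply: mulr_ge0 => //; apply: mulr_ge0 => //; exact: powR_ge0.
Qed.

Lemma KC_ge0 : 0 <= KC.
Proof. rewrite /KC; have := KA_ge0; have : 0 <= N%:R ^+ 2 :> R by apply: exprn_ge0.
lra. Qed.

Lemma genC_bound (g : pstate N -> R) (c : R) : 0 <= c -> (forall p, `|g p| <= c) ->
  forall p, `|genC alpha alphaL alphaR beta g p| <= KC * c.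
Proof.
move=> c0 hc [x y]; rewrite /genC /KC /= [X in _ <= X]mulrDl [X in _ <= X + _]mulrDl.
apply: le_trans (ler_normD _ _) _; apply: lerD.
  apply: le_trans (ler_normD _ _) _; apply: lerD; apply: genA_bound => // z; exact: hc.
rewrite normrM ger0_norm ?exprn_ge0 // -mulrA ler_wpM2l ?exprn_ge0 //.
apply: le_trans (norm_if _ _) _.
rewrite (_ : 4 * c = 2 * 2 * c); last by ring.
by apply: diff_bound.
Qed.

Lemma iter_bound (g : pstate N -> R) (c : R) : 0 <= c -> (forall p, `|g p| <= c) ->
  forall k p, `|iter k (genC alpha alphaL alphaR beta (N:=N)) g p| <= KC ^+ k * c.
Proof.
move=> c0 hc; elim=> [|k IH] p; first by rewrite expr0 mul1r.
rewrite iterS exprS -mulrA; apply: genC_bound; last exact: IH.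
by apply: mulr_ge0 => //; apply: exprn_ge0; exact: KC_ge0.
Qed.

Lemma semi_cvg (g : pstate N -> R) (t : R) (s : pstate N) : 0 <= t ->
  cvgn (fun n : nat => \sum_(k < n) t ^+ k / (k`!)%:R *
     iter k (genC alpha alphaL alphaR beta (N:=N)) g s).
Proof.
move=> t0.
set c : R := \sum_p `|g p|.
have c0 : 0 <= c by apply: sumr_ge0.
have hc : forall p, `|g p| <= c.
  move=> p; rewrite /c (bigD1 p) //= lerDl; exact: sumr_ge0.
set u := fun k : nat => t ^+ k / (k`!)%:R * iter k (genC alpha alphaL alphaR beta (N:=N)) g s.
have -> : (fun n : nat => \sum_(k < n) t ^+ k / (k`!)%:R *
     iter k (genC alpha alphaL alphaR beta (N:=N)) g s) = series u.
  by apply: funext => n; rewrite /series /= big_mkord.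
apply: normed_cvg.
apply: (@series_le_cvg _ _ (c *: exp_coeff (t * KC))).
- by move=> n; rewrite /= normr_ge0.
- move=> n; rewrite /= /exp_coeff /=; apply: mulr_ge0 => //; apply: mulr_ge0.
    by apply: exprn_ge0; apply: mulr_ge0 => //; exact: KC_ge0.
  by rewrite invr_ge0.
- move=> n; rewrite /= /exp_coeff /= /u normrM.
  rewrite ger0_norm; last by apply: mulr_ge0; [exact: exprn_ge0|rewrite invr_ge0].
  rewrite -[X in _ <= X]/(c * ((t * KC) ^+ n / n`!%:R)) exprMn.
  have := @iter_bound g c c0 hc n s.
  have : 0 <= t ^+ n / n`!%:R by apply: mulr_ge0; [exact: exprn_ge0|rewrite invr_ge0].
  move=> h1 h2.
  rewrite [c * _]mulrC -!mulrA ler_wpM2l ?exprn_ge0 //.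
  rewrite mulrC -mulrA ler_wpM2l ?invr_ge0 //.
  by rewrite mulrC.
- exact: is_cvg_seriesZ (is_cvg_series_exp_coeff _).
Qed.

End Aux.

Theorem proposition4p5 (R : realType) (alpha alphaL alphaR beta : R)
  (halpha : 0 < alpha) (halphaL : 0 < alphaL) (halphaR : 0 < alphaR)
  (hbeta : 0 <= beta) (N : nat) (hN : (0 < N)%N) (x y : site N) (t : R)
  (ht : 0 <= t) (f : pstate N -> R) (hf : forall a b, f (a, b) = f (b, a)) :
  semigroup (genB alpha alphaL alphaR beta (N:=N)) t f (x, y)
  = 1 / 2 * semigroup (genC alpha alphaL alphaR beta (N:=N)) t f (x, y)
    + 1 / 2 * semigroup (genC alpha alphaL alphaR beta (N:=N)) t f (y, x).
Proof.
have ha := ltW halpha; have haL := ltW halphaL; have haR := ltW halphaR.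
have fs : f = @symz R N f.
  by apply: funext => -[a b]; rewrite /symz /= hf; field.
rewrite /semigroup.
have cv1 := @semi_cvg R alpha alphaL alphaR beta N ha haL haR f t (x, y) ht.
have cv2 := @semi_cvg R alpha alphaL alphaR beta N ha haL haR f t (y, x) ht.
have -> : (fun n : nat => \sum_(k < n) t ^+ k / (k`!)%:R *
      iter k (genB alpha alphaL alphaR beta (N:=N)) f (x, y)) =
   (fun n : nat => 1 / 2 * (\sum_(k < n) t ^+ k / (k`!)%:R *
      iter k (genC alpha alphaL alphaR beta (N:=N)) f (x, y)) +
      1 / 2 * (\sum_(k < n) t ^+ k / (k`!)%:R *
      iter k (genC alpha alphaL alphaR beta (N:=N)) f (y, x))).
  apply: funext => n; rewrite !mulr_sumr -big_split /=; apply: eq_bigr => k _.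
  rewrite {1}fs iter_key /symz /=; field.
  by rewrite pnatr_eq0 -lt0n fact_gt0.
set u := (fun n : nat => \sum_(k < n) t ^+ k / (k`!)%:R *
      iter k (genC alpha alphaL alphaR beta (N:=N)) f (x, y)) in cv1 *.
set v := (fun n : nat => \sum_(k < n) t ^+ k / (k`!)%:R *
      iter k (genC alpha alphaL alphaR beta (N:=N)) f (y, x)) in cv2 *.
apply: cvg_lim => //.
apply: cvgD.
  exact: (@cvgMl_tmp _ _ \oo%classic _ u (1/2) _ cv1).
exact: (@cvgMl_tmp _ _ \oo%classic _ v (1/2) _ cv2).
Qed.
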